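(* For all integers $v\ge1$ and $0\le i\le v-1$, $$c_{2v,i}=2^{2i}\,\frac{\Gamma(2v-2i)}{\Gamma(2v)}\,s(v,i).$$
   Context: The generalized cosecant numbers $c_{\rho,k}$ are defined as the coefficients of the power series $\left(\frac{x}{\sin x}\right)^{\rho}=\sum_{k\ge0}c_{\rho,k}\,x^{2k}$ (for $|x|<\pi$); in particular $c_{\rho,0}=1$ and $c_{\rho,1}=\rho/6$. For integers $v\ge1$ and $0\le n\le v-1$, $s(v,n)$ denotes the $n$-th elementary symmetric polynomial evaluated at $1^2,2^2,\dots,(v-1)^2$, with $s(v,0)=1$. *)

(* Defs.v *)
From HB Require Import structures.
From mathcomp Require Import all_boot all_order all_algebra.
Set Implicit Arguments. Unset Strict Implicit. Unset Printing Implicit Defensive.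
Import Order.TTheory GRing.Theory Num.Theory.
Local Open Scope ring_scope.

(* Taylor coefficients of sin x / x in the variable y = x^2:
   sin x / x = sum_n (-1)^n x^(2n) / (2n+1)!  *)
Definition sinc_coef (n : nat) : rat := (-1) ^+ n / ((2 * n + 1)`!)%:R.

(* Coefficients b_0, ..., b_n of the reciprocal series x / sin x (in y = x^2),
   via the standard recursion b_0 = 1, b_m = - sum_{j=1}^m a_j b_{m-j}
   (a_0 = 1). *)
Fixpoint xcsc_list (n : nat) : seq rat :=
  match n with
  | 0 => [:: 1]
  | n'.+1 =>
      let s := xcsc_list n' in
      rcons s (- \sum_(1 <= j < n'.+2) sinc_coef j * nth 0 s (n'.+1 - j))
  end.

Definition xcsc_coef (m : nat) : rat := nth 0 (xcsc_list m) m.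

(* Generalized cosecant number c_{rho,k} for a natural exponent rho:
   coefficient of x^(2k) in (x / sin x)^rho.  Only coefficients of index
   <= k of the base series influence coefficient k of its rho-th power,
   so a truncation to degree k is used. *)
Definition cosec_num (rho k : nat) : rat :=
  ((\poly_(m < k.+1) xcsc_coef m) ^+ rho)`_k.

(* s(v,n): n-th elementary symmetric polynomial evaluated at
   1^2, 2^2, ..., (v-1)^2 (indices j : 'I_(v-1) stand for j+1). *)
Definition s_sym (v n : nat) : nat :=
  (\sum_(A : {set 'I_(v.-1)} | #|A| == n) \prod_(j in A) (j.+1 ^ 2)%N)%N.

Definition Gamma_nat (n : nat) : nat := (n.-1)`!.

(* Main.v *)
Require Import Defs.
From HB Require Import structures.
From mathcomp Require Import all_boot all_order all_algebra.
From mathcomp Require Import ring lra zify.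
Import Order.TTheory GRing.Theory Num.Theory.
Local Open Scope ring_scope.


Definition low (N : nat) (p : {poly rat}) := forall m, (m < N)%N -> p`_m = 0.

Lemma low_add N p q : low N p -> low N q -> low N (p + q).
Proof. by move=> hp hq m hm; rewrite coefD hp ?hq ?addr0. Qed.
Lemma low_opp N p : low N p -> low N (- p).
Proof. by move=> hp m hm; rewrite coefN hp ?oppr0. Qed.
Lemma low_sub N p q : low N p -> low N q -> low N (p - q).
Proof. by move=> hp hq; apply: low_add => //; apply: low_opp. Qed.
Lemma low_mull N p q : low N p -> low N (q * p).
Proof.
move=> hp m hm; rewrite coefM big1 // => j _.
rewrite hp ?mulr0 //; apply: leq_ltn_trans hm; exact: leq_subr.
Qed.
Lemma low_mulr N p q : low N p -> low N (p * q).
Proof. by move=> hp; rewrite mulrC; apply: low_mull. Qed.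
Lemma low_eq N p q : p = q -> low N p -> low N q.
Proof. by move=> ->. Qed.

Lemma qpoly_low K p : in_qpoly ('X^(K.+1) : {poly rat}) p = 0 <-> low K.+1 p.
Proof.
have -> : (in_qpoly ('X^(K.+1) : {poly rat}) p = 0) <-> (take_poly K.+1 p = 0).
  split => [h|h].
    have := congr1 val h; rewrite /= mk_monic_Xn /= -Pdiv.RingMonic.take_poly_rmodp => ->.
    done.
  apply: val_inj; rewrite /= mk_monic_Xn /= -Pdiv.RingMonic.take_poly_rmodp h. done.
split => [h m hm|h].
  by have := congr1 (fun q : {poly rat} => q`_m) h; rewrite coef_take_poly hm coef0.
by apply/polyP => m; rewrite coef_take_poly coef0; case: ifP => // /h.
Qed.

Definition E (p : {poly rat}) : {poly rat} := 'X * p^`().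

Lemma coefE_ p m : (E p)`_m = m%:R * p`_m.
Proof.
rewrite /E coefXM; case: m => [|m] /=; first by rewrite mul0r.
by rewrite coef_deriv mulr_natl.
Qed.

Lemma low_E N p : low N p -> low N (E p).
Proof. by move=> h m hm; rewrite coefE_ h ?mulr0. Qed.

Lemma E_add p q : E (p + q) = E p + E q.
Proof. by rewrite /E derivD mulrDr. Qed.
Lemma E_sub p q : E (p - q) = E p - E q.
Proof. by rewrite /E derivB mulrBr. Qed.
Lemma E_mul p q : E (p * q) = E p * q + p * E q.
Proof. rewrite /E derivM; ring. Qed.
Lemma E_nat k : E k%:R = 0.
Proof. by rewrite /E -polyC_natr derivC mulr0. Qed.
Lemma E_X : E 'X = 'X.
Proof. by rewrite /E derivX mulr1. Qed.
Lemma E_natmul k p : E (k%:R * p) = k%:R * E p.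
Proof. by rewrite E_mul E_nat mul0r add0r. Qed.
Lemma E_exp p j : E (p ^+ j.+1) = j.+1%:R * p ^+ j * E p.
Proof.
elim: j => [|j IH]; first by rewrite expr1 expr0 mulr1 mul1r.
rewrite exprS E_mul IH !exprS; ring.
Qed.
Lemma low_eqr N p q : low N p -> p = q -> low N q.
Proof. by move=> h <-. Qed.
Arguments low_add {N p q}. Arguments low_opp {N p}. Arguments low_sub {N p q}.
Arguments low_mull {N p} q. Arguments low_mulr {N p} q. Arguments low_eq {N p q}.
Arguments low_eqr {N p q}. Arguments low_E {N p}.


Lemma size_xcsc n : size (xcsc_list n) = n.+1.
Proof. by elim: n => [|n IH] //=; rewrite size_rcons IH. Qed.

Lemma xcsc_nth n m : (m <= n)%N -> nth 0 (xcsc_list n) m = xcsc_coef m.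
Proof.
elim: n => [|n IH] hm; first by move: hm; rewrite leqn0 => /eqP ->.
rewrite leq_eqVlt in hm; case/orP: hm => [/eqP -> //|hm].
by rewrite /= nth_rcons size_xcsc hm IH.
Qed.

Lemma xcsc_rec n : xcsc_coef n.+1 =
  - \sum_(1 <= j < n.+2) sinc_coef j * xcsc_coef (n.+1 - j).
Proof.
rewrite {1}/xcsc_coef /= nth_rcons size_xcsc ltnn eqxx.
congr (- _); rewrite !big_nat; apply: eq_bigr => j /andP [h1 h2].
by rewrite xcsc_nth //; lia.
Qed.

Lemma sinc0 : sinc_coef 0 = 1.
Proof. by rewrite /sinc_coef expr0 div1r /= invr1. Qed.
Lemma xcsc0 : xcsc_coef 0 = 1.
Proof. by []. Qed.

Lemma conv m : \sum_(j < m.+1) sinc_coef j * xcsc_coef (m - j) = (m == 0)%:R.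
Proof.
case: m => [|n]; first by rewrite big_ord1 sinc0 xcsc0 mulr1.
rewrite big_ord_recl /= sinc0 mul1r subn0 xcsc_rec.
rewrite big_add1 /= big_mkord.
by rewrite addrC (eq_bigr (fun i : 'I_n.+1 => sinc_coef i.+1 * xcsc_coef (n.+1 - i.+1))) ?subrr // => i _; rewrite /bump add1n.
Qed.

Definition Bp K : {poly rat} := \poly_(m < K.+1) xcsc_coef m.
Definition Sp K : {poly rat} := \poly_(m < K.+1) sinc_coef m.

Lemma low_BS K : low K.+1 (Bp K * Sp K - 1).
Proof.
move=> m hm; rewrite coefB coef1 mulrC coefM.
rewrite (eq_bigr (fun j : 'I_m.+1 => sinc_coef j * xcsc_coef (m - j))).
  by rewrite conv subrr.
move=> j _; rewrite !coef_poly; have hj := ltn_ord j.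
rewrite ifT; last by lia. by rewrite ifT; last by lia.
Qed.

Lemma sinc_rec k : 4%:R * (k.+1%:R)^+2 * sinc_coef k.+1 + 2%:R * k.+1%:R * sinc_coef k.+1
   + sinc_coef k = 0.
Proof.
rewrite /sinc_coef.
have -> : (2 * k.+1 + 1 = (2 * k + 1).+2)%N by lia.
rewrite !factS !natrM exprS.
have h1 : ((2 * k + 1)`!)%:R != 0 :> rat by rewrite pnatr_eq0 -lt0n fact_gt0.
have e1 : ((2 * k + 1).+2)%:R = 2 * k%:R + 3 :> rat.
  by rewrite -addn2 !natrD; ring.
have e2 : ((2 * k + 1).+1)%:R = 2 * k%:R + 2 :> rat by rewrite -addn1 !natrD; ring.
have e3 : (k.+1)%:R = k%:R + 1 :> rat by rewrite -addn1 natrD.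
rewrite e1 e2 e3 [(-1) ^+ k.+1]exprS.
have h2 : 2 * k%:R + 3 != 0 :> rat.
  by rewrite -e1 pnatr_eq0.
have h3 : 2 * k%:R + 2 != 0 :> rat.
  by rewrite -e2 pnatr_eq0.
move: h1 h2 h3; set f := _`!%:R; set x := k%:R => h1 h2 h3.
set s := (-1) ^+ k. field. by rewrite h1 h2 h3.
Qed.

Lemma low_sinc K : low K.+1 (4%:R * E (E (Sp K)) + 2%:R * E (Sp K) + 'X * Sp K).
Proof.
move=> m hm; rewrite !coefD.
have h2 : forall q : {poly rat}, (4%:R * q)`_m = 4%:R * q`_m.
  by move=> q; rewrite -polyC_natr coefCM.
have h3 : forall q : {poly rat}, (2%:R * q)`_m = 2%:R * q`_m.
  by move=> q; rewrite -polyC_natr coefCM.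
rewrite h2 h3 !coefE_ coefXM /Sp !coef_poly hm.
clear h2 h3; case: m hm => [|k] hk.
  by rewrite !mul0r !mulr0 !addr0.
rewrite /= ifT; last by lia.
rewrite -(sinc_rec k); ring.
Qed.


Lemma E_sq p : E (p ^+ 2) = 2%:R * p * E p.
Proof. by rewrite E_exp expr1. Qed.

Lemma low_G K : let S := Sp K in
  low K.+1 ((S + 2%:R * E S) ^+ 2 + 'X * S ^+ 2 - 1).
Proof.
move=> S.
set G := (S + 2%:R * E S) ^+ 2 + 'X * S ^+ 2.
have hEG : E G = (S + 2%:R * E S) * (4%:R * E (E S) + 2%:R * E S + 'X * S).
  rewrite /G E_add E_sq E_mul E_X E_sq E_add E_natmul; ring.
have lEG : low K.+1 (E G) by rewrite hEG; apply: low_mull; apply: low_sinc.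
move=> m hm; rewrite coefB coef1.
case: m hm => [|k] hk.
  rewrite /G coefD coefXM /= expr2 coef0M coefD.
  have -> : (2%:R * E S)`_0 = 0 by rewrite -polyC_natr coefCM coefE_ mul0r mulr0.
  by rewrite /S /Sp coef_poly /= sinc0 addr0 mulr1 subrr.
have := lEG _ hk; rewrite coefE_ /= subr0 => /eqP; rewrite mulf_eq0 pnatr_eq0 /=.
by move/eqP.
Qed.


Lemma abstract_main (R : comNzRingType) (B S es ees eb eeb x nn : R) :
  B * S - 1 = 0 ->
  eb * S + B * es = 0 ->
  eeb * S + 2%:R * eb * es + B * ees = 0 ->
  4%:R * ees + 2%:R * es + x * S = 0 ->
  (S + 2%:R * es) ^+ 2 + x * S ^+ 2 - 1 = 0 ->
  nn * (nn + 1) * B ^+ 4 - (4%:R * (nn * (nn - 1) * eb ^+ 2 + nn * B * eeb)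
     - 2%:R * (2%:R * nn + 1) * nn * B * eb + nn * (nn + 1) * B ^+ 2
     + nn ^+ 2 * x * B ^+ 2) = 0.
Proof.
move=> h1 h2 h3 h4 h5.
have Eeb : eb = - (B ^+ 2 * es).
  apply/eqP; rewrite -subr_eq0 opprK.
  have -> : eb + B ^+ 2 * es = - eb * (B * S - 1) + B * (eb * S + B * es) by ring.
  by rewrite h1 h2 !mulr0 addr0.
subst eb.
have Eeeb : eeb = 2%:R * B ^+ 3 * es ^+ 2 - B ^+ 2 * ees.
  apply/eqP; rewrite -subr_eq0.
  have -> : eeb - (2%:R * B ^+ 3 * es ^+ 2 - B ^+ 2 * ees) =
     - eeb * (B * S - 1) + B * (eeb * S + 2%:R * - (B ^+ 2 * es) * es + B * ees) by ring.
  by rewrite h1 h3 !mulr0 addr0.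
subst eeb.
set K := - 4%:R * nn * (nn + 1) * B ^+ 3 * es - nn * (nn + 1) * B ^+ 2 * (1 + B * S)
   - nn * x * S * B ^+ 3 - nn ^+ 2 * x * B ^+ 2 * (1 + B * S).
have -> : nn * (nn + 1) * B ^+ 4 - (4%:R * (nn * (nn - 1) * (- (B ^+ 2 * es)) ^+ 2 + nn * B * (2%:R * B ^+ 3 * es ^+ 2 - B ^+ 2 * ees))
     - 2%:R * (2%:R * nn + 1) * nn * B * (- (B ^+ 2 * es)) + nn * (nn + 1) * B ^+ 2
     + nn ^+ 2 * x * B ^+ 2) =
   nn * B ^+ 3 * (4%:R * ees + 2%:R * es + x * S)
   - nn * (nn + 1) * B ^+ 4 * ((S + 2%:R * es) ^+ 2 + x * S ^+ 2 - 1)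
   - (B * S - 1) * K by rewrite /K; ring.
by rewrite h1 h4 h5 !mulr0 mul0r !subr0.
Qed.

Lemma abstract_morph (A R : comNzRingType) (f : {rmorphism A -> R})
  (B S es ees eb eeb x : A) (n : nat) :
  f (B * S - 1) = 0 ->
  f (eb * S + B * es) = 0 ->
  f (eeb * S + 2%:R * eb * es + B * ees) = 0 ->
  f (4%:R * ees + 2%:R * es + x * S) = 0 ->
  f ((S + 2%:R * es) ^+ 2 + x * S ^+ 2 - 1) = 0 ->
  f (n%:R * (n%:R + 1) * B ^+ 4 - (4%:R * (n%:R * (n%:R - 1) * eb ^+ 2 + n%:R * B * eeb)
     - 2%:R * (2%:R * n%:R + 1) * n%:R * B * eb + n%:R * (n%:R + 1) * B ^+ 2
     + n%:R ^+ 2 * x * B ^+ 2)) = 0.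
Proof.
move=> h1 h2 h3 h4 h5.
rewrite !(rmorph_nat, rmorphXn, rmorphB, rmorphD, rmorphM, rmorphN, rmorph1) in h1 h2 h3 h4 h5 *.
exact: abstract_main h1 h2 h3 h4 h5.
Qed.


Lemma E1 : E 1 = 0.
Proof. by rewrite /E -polyC1 derivC mulr0. Qed.

Section Main.
Variables (K k : nat).
Let B := Bp K.
Let S := Sp K.
Let f := in_qpoly ('X^(K.+1) : {poly rat}).

Lemma fz p : low K.+1 p -> f p = 0.
Proof. by move=> h; apply/qpoly_low. Qed.

Let P := B ^+ k.+2.
Definition Dp := ((k.+2)*(k.+3))%:R * B ^+ k.+4 - (4%:R * E (E P) - (2*(2*k+5))%:R * E P
   + ((k.+2)*(k.+3))%:R * P + ((k.+2)^2)%:R * ('X * P)).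

Lemma low_D : low K.+1 Dp.
Proof.
set nn : {poly rat} := (k.+2)%:R.
set Dq := nn * (nn + 1) * B ^+ 4 - (4%:R * (nn * (nn - 1) * (E B) ^+ 2 + nn * B * E (E B))
     - 2%:R * (2%:R * nn + 1) * nn * B * E B + nn * (nn + 1) * B ^+ 2
     + nn ^+ 2 * 'X * B ^+ 2).
have eqD : Dp = B ^+ k * Dq.
  rewrite /Dp /Dq /P /nn !E_exp E_mul E_mul E_nat E_exp.
  rewrite !exprS; ring.
rewrite eqD; apply: low_mull.
have l1 : low K.+1 (B * S - 1) := low_BS K.
have l2 : low K.+1 (E B * S + B * E S).
  by apply: (low_eqr (low_E l1)); rewrite E_sub E_mul E1 subr0.
have l3 : low K.+1 (E (E B) * S + 2%:R * E B * E S + B * E (E S)).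
  apply: (low_eqr (low_E l2)); rewrite E_add !E_mul; ring.
have l4 : low K.+1 (4%:R * E (E S) + 2%:R * E S + 'X * S) := low_sinc K.
have l5 : low K.+1 ((S + 2%:R * E S) ^+ 2 + 'X * S ^+ 2 - 1) := low_G K.
apply/qpoly_low.
apply: (@abstract_morph _ _ (in_qpoly ('X^(K.+1) : {poly rat}))).

- exact: fz _ l1.
- exact: fz _ l2.
- exact: fz _ l3.
- exact: fz _ l4.
- exact: fz _ l5.
Qed.
End Main.


Lemma trunc n m K : (m <= K)%N -> cosec_num n m = (Bp K ^+ n)`_m.
Proof.
move=> hmK.
have hl : low m.+1 (Bp m - Bp K).
  move=> j hj; rewrite coefB /Bp !coef_poly hj ifT ?subrr //; lia.
have hl2 : low m.+1 (Bp m ^+ n - Bp K ^+ n) by rewrite subrXX; apply: low_mulr.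
have := hl2 m (ltnSn m); rewrite coefB => /eqP; rewrite subr_eq0 => /eqP <-.
done.
Qed.

Lemma cosec0 n : cosec_num n 0 = 1.
Proof.
rewrite /cosec_num.
have -> : \poly_(m < 1) xcsc_coef m = 1.
  apply/polyP => j; rewrite coef_poly coef1; case: j => //.
by rewrite expr1n coef1.
Qed.

Lemma coefnM (c : nat) (p : {poly rat}) m : (c%:R * p)`_m = c%:R * p`_m.
Proof. by rewrite -polyC_natr coefCM. Qed.

Lemma cosec_rec k j :
  ((k.+2)*(k.+3))%:R * cosec_num k.+4 j.+1 =
   (4%:R * (j.+1)%:R ^+ 2 - (2*(2*k+5))%:R * (j.+1)%:R + ((k.+2)*(k.+3))%:R) * cosec_num k.+2 j.+1
   + ((k.+2)^2)%:R * cosec_num k.+2 j.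
Proof.
have := @low_D j.+1 k j.+1 (ltnSn _).
rewrite /Dp !(coefB, coefD) !coefnM !coefE_ coefXM /=.
rewrite -!trunc // => /eqP; rewrite subr_eq0 => /eqP ->.
ring.
Qed.


Definition sp w : {poly rat} := \prod_(i < w) (((i.+1 ^ 2)%N%:R)%:P * 'X + 1).

Lemma s_poly w n : (s_sym w.+1 n)%:R = (sp w)`_n.
Proof.
rewrite /s_sym /= natr_sum.
rewrite /sp bigA_distr coef_sum.
rewrite (big_mkcond (fun A : {set 'I_w} => #|A| == n)) /=.
apply: eq_bigr => A _.
rewrite -big_mkcond /= [in RHS]big_split /= prodr_const -rmorph_prod /= coefCM coefXn.
rewrite natr_prod eq_sym.
by case: (n == #|A|); rewrite ?mulr1 ?mulr0.
Qed.

Lemma sp_rec w j : (sp w.+1)`_j.+1 = (sp w)`_j.+1 + (w.+1 ^ 2)%N%:R * (sp w)`_j.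
Proof.
rewrite /sp big_ord_recr /= mulrDr mulr1 mulrA coefD coefMX /= coefMC addrC.
by rewrite mulrC.
Qed.

Lemma s_rec w j : s_sym w.+2 j.+1 = (s_sym w.+1 j.+1 + w.+1 ^ 2 * s_sym w.+1 j)%N.
Proof.
apply/eqP; rewrite -(eqr_nat rat) natrD natrM !s_poly sp_rec //.
Qed.

Lemma s_zero w : s_sym w.+1 0 = 1%N.
Proof.
apply/eqP; rewrite -(eqr_nat rat) s_poly /sp coef0_prod.
by rewrite big1 // => i _; rewrite coefD coef1 coefMX /= add0r.
Qed.

Lemma s_top w : s_sym w.+1 w.+1 = 0%N.
Proof.
rewrite /s_sym /= big_pred0 // => A.
apply/negbTE/negP => /eqP e; have := max_card A; by rewrite card_ord e ltnn.
Qed.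


Lemma arith (c a b F P al Q r1 r2 R : rat) : P * c = al * a + Q * b ->
  a * F = r1 -> b * F = r2 -> R = al * r1 + Q * r2 -> c * (P * F) = R.
Proof.
move=> h hA hB ->; rewrite mulrA (mulrC c) h mulrDl -!mulrA hA hB //.
Qed.

Lemma fact2 n : (n.+2`! = n.+2 * n.+1 * n`!)%N.
Proof. by rewrite !factS mulnA. Qed.

Lemma claim i d : cosec_num (2 * (i + d + 1)) i * ((2 * (i + d) + 1)`!)%:R =
  (4 ^ i)%:R * ((2 * d + 1)`!)%:R * (s_sym (i + d + 1) i)%:R.
Proof.
elim: i d => [|j IHj] d.
  by rewrite cosec0 !add0n (addn1 d) s_zero expn0 mul1r mulr1.
elim: d => [|d IHd].
  have e1 : (2 * (j.+1 + 0 + 1) = (2 * j).+4)%N by lia.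
  have e2 : (2 * (j.+1 + 0) + 1 = (2 * j + 1).+2)%N by lia.
  rewrite e1 e2 fact2 natrM.
  have r := cosec_rec (2 * j) j.
  have hj := IHj 0%N.
  rewrite (_ : (2 * (j + 0 + 1) = (2 * j).+2)%N) in hj; last by lia.
  rewrite (_ : (j + 0 + 1 = j.+1)%N) in hj; last by lia.
  rewrite (_ : (2 * (j + 0) + 1 = 2 * j + 1)%N) in hj; last by lia.
  rewrite (_ : (j.+1 + 0 + 1 = j.+2)%N); last by lia.
  rewrite s_rec s_top add0n.
  have hz : (4%:R * (j.+1)%:R ^+ 2 - (2*(2*(2 * j)+5))%:R * (j.+1)%:R + (((2 * j).+2)*((2 * j).+3))%:R) = 0 :> rat.
    have hn : (4 * j.+1 ^ 2 + (2 * j).+2 * (2 * j).+3 = 2 * (2 * (2 * j) + 5) * j.+1)%N by nia.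
    by rewrite -natrX -!natrM addrAC -natrD hn subrr.
  rewrite hz mul0r add0r in r.
  rewrite (_ : ((2 * j + 1).+2 * (2 * j + 1).+1 = (2 * j).+2 * (2 * j).+3)%N); last by lia.
  rewrite mulrA (mulrC (cosec_num _ _)) r -mulrA hj.
  rewrite -!natrM; congr (_%:R).
  rewrite [(4 ^ j.+1)%N]expnS.
  ring.
have r := cosec_rec (2 * (j + d + 1)) j.
move: r; set k := (2 * (j + d + 1))%N => r.
have hj := IHj d.+1.
rewrite (_ : (2 * (j + d.+1 + 1) = k.+2)%N) in hj; last by rewrite /k; lia.
rewrite (_ : (2 * (j + d.+1) + 1 = k.+1)%N) in hj; last by rewrite /k; lia.
rewrite (_ : (j + d.+1 + 1 = (j + d + 1).+1)%N) in hj; last by lia.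
rewrite (_ : (2 * d.+1 + 1 = (2 * d + 1).+2)%N) in hj; last by lia.
rewrite (_ : (2 * (j.+1 + d + 1) = k.+2)%N) in IHd; last by rewrite /k; lia.
rewrite (_ : (2 * (j.+1 + d) + 1 = k.+1)%N) in IHd; last by rewrite /k; lia.
rewrite (_ : (j.+1 + d + 1 = (j + d + 1).+1)%N) in IHd; last by lia.
rewrite (_ : (2 * (j.+1 + d.+1 + 1) = k.+4)%N); last by rewrite /k; lia.
rewrite (_ : (2 * (j.+1 + d.+1) + 1 = k.+3)%N); last by rewrite /k; lia.
rewrite (_ : (j.+1 + d.+1 + 1 = (j + d + 1).+2)%N); last by lia.
rewrite (_ : (2 * d.+1 + 1 = (2 * d + 1).+2)%N); last by lia.
have hal : 4%:R * (j.+1)%:R ^+ 2 - (2*(2*k+5))%:R * (j.+1)%:R + ((k.+2)*(k.+3))%:R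
    = (((2 * d + 1).+2 * (2 * d + 1).+1)%N)%:R :> rat.
  have hn : (4 * j.+1 ^ 2 + k.+2 * k.+3 = (2 * d + 1).+2 * (2 * d + 1).+1 + 2 * (2 * k + 5) * j.+1)%N.
    by rewrite /k; nia.
  rewrite -natrX -!natrM addrAC -natrD; apply/eqP; rewrite subr_eq -natrD hn //.
rewrite hal in r.
rewrite s_rec fact2 [X in _ = _ * X%:R * _]fact2 (natrM _ _ (k.+1)`!).
rewrite (_ : (k.+3 * k.+2 = k.+2 * k.+3)%N); last by lia.
rewrite mulrA (mulrC (cosec_num _ _)) r mulrDl -!mulrA IHd hj.
rewrite -!natrM -natrD; congr (_%:R).
rewrite fact2 [(4 ^ j.+1)%N]expnS /k.
ring.
Qed.


Theorem mainTheorem5 (v i : nat) :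
  (1 <= v)%N -> (i <= v - 1)%N ->
  cosec_num (2 * v) i =
    (2 ^ (2 * i))%:R * ((Gamma_nat (2 * v - 2 * i))%:R / (Gamma_nat (2 * v))%:R)
    * (s_sym v i)%:R.
Proof.
move=> hv hi.
have [d ->] : exists d, v = (i + d + 1)%N by exists (v - 1 - i)%N; lia.
have cl := claim i d.
rewrite /Gamma_nat.
rewrite (_ : ((2 * (i + d + 1) - 2 * i).-1 = 2 * d + 1)%N); last by lia.
rewrite (_ : ((2 * (i + d + 1)).-1 = 2 * (i + d) + 1)%N); last by lia.
rewrite (_ : (2 ^ (2 * i) = 4 ^ i)%N); last by rewrite expnM.
have hF : ((2 * (i + d) + 1)`!)%:R != 0 :> rat by rewrite pnatr_eq0 -lt0n fact_gt0.
apply: (mulIf hF); rewrite cl.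
move: hF; set F := _%:R; move=> hF.
field. exact: hF.
Qed.
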